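(* Let $T$ be a TCD map on a minimal BTB graph $G$ and $H$ a hyperplane. Suppose $\tilde T$ is obtained from $T$ by a local move, and $H$ is generic with respect to both $T$ and $\tilde T$. If the move is a resplit at an internal white vertex $w_0$, then the affine cluster structure of $\tilde T$ with respect to $H$ is obtained from that of $T$ by mutation at $w_0$ (identifying $\tilde w_0$ with $w_0$ and all other white vertices with themselves). If the move is a spider move, the affine cluster structure with respect to $H$ is unchanged.
   Context: A BTB graph is a finite planar bipartite graph $G$ (black $B$, white $W$) in a closed disk or cactus. It has boundary white vertices $w_1^\partial,\dots,w_n^\partial$ in clockwise order on the boundary, and every black vertex has degree $3$. Minimality: with zig-zag paths turning maximally left at white and right at black vertices, none is closed, none traverses an edge twice, and no two both traverse two distinct edges $e_1$ then $e_2$. A TCD map is $T:W\to\mathbb{CP}^d$ such that the three neighbours of each black vertex have pairwise distinct collinear images. A hyperplane $H=\mathbb P(\ker h)$ is generic with respect to $T$ if it contains no $T(w)$. A VRC in affine gauge with respect to $H$ consists of lifts $V(w)$ with $h(V(w))=1$ and edge weights $\mu$ with $\sum_{w\sim b}\mu(bw)V(w)=0$; then $\sum_{w\sim b}\mu(bw)=0$. Affine cluster structure. The quiver has a vertex per white vertex, mutable if internal and frozen if boundary. For each black vertex with neighbours $w_1,w_2,w_3$ in clockwise order, add arrows $w_1\to w_2\to w_3\to w_1$; add arrows $w^\partial_{i+1}\to w^\partial_i$; delete oriented $2$-cycles. For an internal white vertex $w$ with black neighbours $b_1,\dots,b_m$ in counterclockwise order, and $w_i,w_i'$ the other neighbours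 of $b_i$ with counterclockwise order $w,w_i,w_i'$ around $b_i$, set $Y_w=(-1)^{m+1}\prod_i\mu(b_iw_i')/\mu(b_iw_i)$ in affine gauge. Moves. Resplit: at a degree-$2$ internal white vertex $w_0$ with black neighbours $b$ (other neighbours $w_1,w_2$) and $b'$ (other neighbours $w_3,w_4$), with $w_1,w_4$ on one face containing $b,w_0,b'$ and $w_2,w_3$ on the other. It replaces $w_0,b,b'$ by $\tilde w_0$ and black vertices adjacent to $\{\tilde w_0,w_1,w_4\}$ and $\{\tilde w_0,w_2,w_3\}$. Writing $V(w_0)=\alpha_1V(w_1)+\alpha_2V(w_2)=\alpha_3V(w_3)+\alpha_4V(w_4)$, set $\tilde T(\tilde w_0)=[\alpha_1V(w_1)-\alpha_4V(w_4)]$; other points are unchanged. Spider move: at an internal face with boundary $w_1,b,w_3,b'$, with third neighbours $w_2$ of $b$ and $w_4$ of $b'$. It replaces $b,b'$ by black vertices adjacent to $\{w_1,w_2,w_4\}$ and $\{w_3,w_2,w_4\}$ and keeps all points. Mutation at $v$. With $\nu(a,c)=\#(a\to c)-\#(c\to a)$: $\nu'(a,c)=-\nu(a,c)$ if $v\in\{a,c\}$, and otherwise $\nu'(a,c)=\nu(a,c)+\max(0,\nu(a,v))\max(0,\nu(v,c))-\max(0,\nu(c,v))\max(0,\nu(v,a))$. The variables transform as $Y'_v=Y_v^{-1}$; $Y'_u=Y_u(1+Y_v)^{\nu(v,u)}$ if $\nu(v,u)>0$; $Y'_u=Y_u(1+Y_v^{-1})^{-\nu(u,v)}$ if $\nu(u,v)>0$;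 and $Y'_u=Y_u$ otherwise. *)

(* Defs.v *)
From Stdlib Require Import Reals.
From HB Require Import structures.
From mathcomp Require Import all_boot all_order all_algebra all_fingroup.
From mathcomp Require Import complex Rstruct.

Set Implicit Arguments. Unset Strict Implicit. Unset Printing Implicit Defensive.
Import Order.TTheory GRing.Theory Num.Theory.
Local Open Scope ring_scope.

Definition C : fieldType := Rdefinitions.R[i].

(* White vertices: a finType W.  Black vertices: a finType B.  Every black  *)
(* vertex has degree 3: [nb b : 'I_3 -> W] lists its three white neighbours *)
(* in CLOCKWISE order (nb b 0, nb b 1, nb b 2).  The edges of G are thus    *)
(* the pairs (b, i) : B * 'I_3, edge (b,i) joining b and nb b i.            *)
(* The boundary white vertices w^\partial_1..w^\partial_n in clockwise      *)
(* order on the boundary are [bd : 'I_n -> W] (0-based, injective).         *)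
(* The embedding in the disk (or cactus) is encoded as a genus-0            *)
(* combinatorial map after "coning off" the boundary: one adds an extra     *)
(* black vertex b_oo in the outer region joined by a "spoke" edge inr j to  *)
(* each boundary vertex bd j.  Extended edge set: xedge B n.                *)
(* rot : {perm xedge B n} is the clockwise rotation around white vertices   *)
(* (spokes included); the clockwise rotation around black vertices is       *)
(* i |-> i+1 at b, and j |-> j-1 around b_oo (clockwise around the outer    *)
(* vertex = counterclockwise along the boundary circle).                    *)

Definition edge (B : finType) : finType := (B * 'I_3)%type.
Definition xedge (B : finType) (n : nat) : finType := (edge B + 'I_n)%type.

Definition xwh (W B : finType) (n : nat) (nb : B -> 'I_3 -> W) (bd : 'I_n -> W)
  (e : xedge B n) : W :=
  match e with inl (b, i) => nb b i | inr j => bd j end.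

Definition xrotB (B : finType) (n : nat) (e : xedge B n) : xedge B n :=
  match e with inl (b, i) => inl (b, ordS i) | inr j => inr (ord_pred j) end.

Definition xrotBinv (B : finType) (n : nat) (e : xedge B n) : xedge B n :=
  match e with inl (b, i) => inl (b, ord_pred i) | inr j => inr (ordS j) end.

(* Face permutation: for an edge e, viewed as traversed from its white end  *)
(* to its black end with the face F on its right, face_next e is the next   *)
(* edge of the boundary of F traversed in the same way (from white to       *)
(* black).  Faces are the orbits of face_next.                              *)
Definition face_next (B : finType) (n : nat) (rot : {perm xedge B n})
  (e : xedge B n) : xedge B n :=
  (rot^-1)%g (xrotBinv e).

Definition map_adj (B : finType) (n : nat) (rot : {perm xedge B n}) :
  rel (xedge B n) :=
  fun x y => [|| y == xrotB x, y == rot x, x == xrotB y | x == rot y].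

(* rot is a rotation system for the white vertices, and the resulting       *)
(* combinatorial map has genus 0 (Euler: V - E + F = 2 * #components).      *)
Definition btb_embedding (W B : finType) (n : nat) (nb : B -> 'I_3 -> W)
  (bd : 'I_n -> W) (rot : {perm xedge B n}) : Prop :=
  [/\ injective bd,
      (forall e, xwh nb bd (rot e) = xwh nb bd e),
      (forall e e', xwh nb bd e = xwh nb bd e' -> fconnect rot e e') &
      (fcard (@xrotB B n) predT + fcard rot predT
         + fcard (fun e => xrotB (rot e)) predT
       = #|{: xedge B n}| + 2 * n_comp (map_adj rot) predT)%N ].

Definition internal (W : finType) (n : nat) (bd : 'I_n -> W) (w : W) : bool :=
  w \notin codom bd.

(* A dart is an edge of G with a direction: (e, true) = traversed towards   *)
(* its white end, (e, false) = traversed towards its black end.             *)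
(* Zig-zag paths turn maximally left at white vertices (take the next edge  *)
(* clockwise) and maximally right at black vertices (next edge              *)
(* counterclockwise).  A path reaching a boundary vertex where the next     *)
(* clockwise edge is the spoke (i.e. leaves the disk) ends there.           *)

Definition dart (B : finType) : finType := (edge B * bool)%type.

Definition zz_step (B : finType) (n : nat) (rot : {perm xedge B n})
  (x : dart B) : option (dart B) :=
  match x with
  | (e, true) => match rot (inl e) with inl e' => Some (e', false) | inr _ => None end
  | ((b, i), false) => Some ((b, ord_pred i), true)
  end.

Definition zz_iter (B : finType) (n : nat) (rot : {perm xedge B n}) (k : nat)
  (x : dart B) : option (dart B) :=
  iter k (fun o => obind (zz_step rot) o) (Some x).

Definition zz_after (B : finType) (n : nat) (rot : {perm xedge B n})
  (x y : dart B) : Prop :=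
  exists2 k : nat, leq 1 k & zz_iter rot k x = Some y.

Definition zz_same (B : finType) (n : nat) (rot : {perm xedge B n})
  (x y : dart B) : Prop :=
  exists k : nat, zz_iter rot k x = Some y \/ zz_iter rot k y = Some x.

Definition minimal (B : finType) (n : nat) (rot : {perm xedge B n}) : Prop :=
  [/\
      (forall x, ~ zz_after rot x x),
      (forall x y, zz_after rot x y -> y.1 <> x.1) &
      (* no two zig-zag paths both traverse distinct edges e1 then e2 *)
      (forall x1 y1 x2 y2, zz_after rot x1 y1 -> zz_after rot x2 y2 ->
         x1.1 = x2.1 -> y1.1 = y2.1 -> x1.1 <> y1.1 -> zz_same rot x1 x2) ].

(* Projective geometry in CP^d: a point is represented by a nonzero vector  *)
(* of C^(d+1) (a row vector); two vectors represent the same point iff      *)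
(* they are proportional.                                                   *)

Definition proj_eq (d : nat) (u v : 'rV[C]_d.+1) : Prop :=
  exists2 c : C, c != 0 & u = c *: v.

Definition collinear3 (d : nat) (u v w : 'rV[C]_d.+1) : bool :=
  (\rank (col_mx u (col_mx v w)) <= 2)%N.

Definition is_TCD (W B : finType) (d : nat) (nb : B -> 'I_3 -> W)
  (T : W -> 'rV[C]_d.+1) : Prop :=
  (forall w, T w != 0) /\
  (forall b, (forall i j : 'I_3, i != j -> ~ proj_eq (T (nb b i)) (T (nb b j)))
             /\ collinear3 (T (nb b 0)) (T (nb b 1)) (T (nb b 2))).

(* the linear form h (hyperplane H = P(ker h)) evaluated on a vector *)
Definition hval (d : nat) (h : 'cV[C]_d.+1) (v : 'rV[C]_d.+1) : C := (v *m h) 0 0.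

Definition generic (W : finType) (d : nat) (h : 'cV[C]_d.+1)
  (T : W -> 'rV[C]_d.+1) : Prop := forall w, hval h (T w) != 0.

Definition aff (d : nat) (h : 'cV[C]_d.+1) (v : 'rV[C]_d.+1) : 'rV[C]_d.+1 :=
  (hval h v)^-1 *: v.

Definition affine_VRC (W B : finType) (d : nat) (nb : B -> 'I_3 -> W)
  (T : W -> 'rV[C]_d.+1) (h : 'cV[C]_d.+1)
  (V : W -> 'rV[C]_d.+1) (mu : B -> 'I_3 -> C) : Prop :=
  [/\ (forall w, hval h (V w) = 1),
      (forall w, proj_eq (V w) (T w)),
      (forall b i, mu b i != 0) &
      (forall b, \sum_(i < 3) mu b i *: V (nb b i) = 0) ].

Definition bz (b : bool) : int := if b then 1 else 0.

(* nu(a, c) = #(a -> c) - #(c -> a) in the quiver: arrows w1->w2->w3->w1   *)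
(* for each black vertex with clockwise neighbours w1,w2,w3, and arrows     *)
(* w_(i+1) -> w_i between consecutive boundary vertices (i = 1..n-1).       *)
(* Deleting oriented 2-cycles does not change nu.                           *)
Definition quiver (W B : finType) (n : nat) (nb : B -> 'I_3 -> W)
  (bd : 'I_n -> W) (a c : W) : int :=
  \sum_(e : edge B)
     (bz ((nb e.1 e.2 == a) && (nb e.1 (ordS e.2) == c))
      - bz ((nb e.1 e.2 == c) && (nb e.1 (ordS e.2) == a)))
  + \sum_(i : 'I_n) \sum_(j : 'I_n | val i == (val j).+1)
     (bz ((bd i == a) && (bd j == c)) - bz ((bd i == c) && (bd j == a))).

(* Y_w = (-1)^(m+1) prod_i mu(b_i w_i') / mu(b_i w_i).  If w = nb b k, the  *)
(* counterclockwise order around b is w = nb b k, w_i = nb b (k-1),         *)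
(* w_i' = nb b (k+1).                                                       *)
Definition Yvar (W B : finType) (nb : B -> 'I_3 -> W) (mu : B -> 'I_3 -> C)
  (w : W) : C :=
  (-1) ^+ (#|[pred e : edge B | nb e.1 e.2 == w]|.+1)
  * \prod_(e : edge B | nb e.1 e.2 == w) (mu e.1 (ordS e.2) / mu e.1 (ord_pred e.2)).

Definition mut_quiver (W : finType) (nu : W -> W -> int) (v a c : W) : int :=
  if (a == v) || (c == v) then - nu a c
  else nu a c + Num.max 0 (nu a v) * Num.max 0 (nu v c)
              - Num.max 0 (nu c v) * Num.max 0 (nu v a).

Definition mut_Y (W : finType) (nu : W -> W -> int) (Y : W -> C) (v u : W) : C :=
  if u == v then (Y v)^-1
  else if 0 < nu v u then Y u * (1 + Y v) ^ (nu v u)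
  else if 0 < nu u v then Y u * (1 + (Y v)^-1) ^ (- nu u v)
  else Y u.

(* Local moves.  The moved graph has the same white vertices (the new       *)
(* vertex ~w0 is identified with w0, all others with themselves) and the    *)
(* same boundary; the two black vertices replaced by the move are reused as *)
(* names for the two new black vertices.  nb' is the adjacency (clockwise)  *)
(* of the new graph.                                                        *)

(* Resplit at the degree-2 internal white vertex w0 with black neighbours   *)
(* b (other neighbours w1, w2) and b' (other neighbours w3, w4), w1, w4 on  *)
(* one face containing b, w0, b' and w2, w3 on the other.  In terms of the  *)
(* rotation system this means (up to the symmetric relabelling             *)
(* 1<->2, 3<->4, which leaves the move unchanged) that b has clockwise      *)
(* neighbours (w0, w1, w2) and b' has clockwise neighbours (w0, w3, w4).    *)
(* The new black vertices, adjacent to {~w0, w1, w4} and {~w0, w2, w3},     *)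
(* then have clockwise neighbours (~w0, w4, w1) and (~w0, w2, w3).          *)
Definition resplit_graph (W B : finType) (n : nat) (nb nb' : B -> 'I_3 -> W)
  (bd : 'I_n -> W) (w0 w1 w2 w3 w4 : W) (b b' : B) : Prop :=
  [/\ b != b', internal bd w0 &
      #|[pred e : edge B | nb e.1 e.2 == w0]| = 2%N] /\
  [/\ (exists i, [/\ nb b i = w0, nb b (ordS i) = w1 & nb b (ordS (ordS i)) = w2]),
      (exists j, [/\ nb b' j = w0, nb b' (ordS j) = w3 & nb b' (ordS (ordS j)) = w4]),
      (exists i, [/\ nb' b i = w0, nb' b (ordS i) = w4 & nb' b (ordS (ordS i)) = w1]),
      (exists j, [/\ nb' b' j = w0, nb' b' (ordS j) = w2 & nb' b' (ordS (ordS j)) = w3]) &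
      forall c, c != b -> c != b' -> nb' c = nb c ].

Definition resplit_points (W : finType) (d : nat) (h : 'cV[C]_d.+1)
  (T T' : W -> 'rV[C]_d.+1) (w0 w1 w2 w3 w4 : W) : Prop :=
  (forall w, w != w0 -> proj_eq (T' w) (T w)) /\
  exists a1 a2 a3 a4 : C,
    [/\ aff h (T w0) = a1 *: aff h (T w1) + a2 *: aff h (T w2),
        aff h (T w0) = a3 *: aff h (T w3) + a4 *: aff h (T w4) &
        proj_eq (T' w0) (a1 *: aff h (T w1) - a4 *: aff h (T w4))].

(* Spider move at the internal face with boundary w1, b, w3, b' (labelled   *)
(* so that this is the clockwise order around the face), w2 the third      *)
(* neighbour of b, w4 the third neighbour of b'.  Then b has clockwise      *)
(* neighbours (w1, w2, w3), b' has clockwise neighbours (w1, w3, w4), and   *)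
(* the face to the right of w1 -> b (resp. w3 -> b') is exactly the face    *)
(* w1, b, w3, b'.  The new black vertices, adjacent to {w1, w2, w4} and     *)
(* {w3, w2, w4}, have clockwise neighbours (w1, w2, w4) and (w3, w4, w2).   *)
Definition spider_graph (W B : finType) (n : nat) (nb nb' : B -> 'I_3 -> W)
  (rot : {perm xedge B n}) (w1 w2 w3 w4 : W) (b b' : B) : Prop :=
  b != b' /\
  exists i j,
  [/\ [/\ nb b i = w1, nb b (ordS i) = w2 & nb b (ordS (ordS i)) = w3],
      [/\ nb b' j = w1, nb b' (ordS j) = w3 & nb b' (ordS (ordS j)) = w4],
      face_next rot (inl (b, i)) = inl (b', ordS j) &
      face_next rot (inl (b', ordS j)) = inl (b, i)] /\
  [/\ (exists k, [/\ nb' b k = w1, nb' b (ordS k) = w2 & nb' b (ordS (ordS k)) = w4]),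
      (exists l, [/\ nb' b' l = w3, nb' b' (ordS l) = w4 & nb' b' (ordS (ordS l)) = w2]) &
      forall c, c != b -> c != b' -> nb' c = nb c ].

(* Main.v *)
Require Import Defs.
From HB Require Import structures.
From mathcomp Require Import all_boot all_order all_algebra all_fingroup.
From mathcomp Require Import complex Rstruct.
From mathcomp Require Import ring lra zify.
Import Order.TTheory GRing.Theory Num.Theory.
Set Implicit Arguments. Unset Strict Implicit. Unset Printing Implicit Defensive.
Local Open Scope ring_scope.


Lemma ordS3K (i : 'I_3) : ordS (ordS (ordS i)) = i.
Proof. by apply: val_inj; case: i => [[|[|[|?]]] ?]. Qed.
Lemma ord_pred3 (i : 'I_3) : ord_pred i = ordS (ordS i).
Proof. by apply: val_inj; case: i => [[|[|[|?]]] ?]. Qed.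
Lemma ord_predS3 (i : 'I_3) : ord_pred (ordS i) = i.
Proof. by apply: val_inj; case: i => [[|[|[|?]]] ?]. Qed.

Lemma big_rot3 (R : Type) (idx : R) (op : Monoid.com_law idx) (F : 'I_3 -> R) (i : 'I_3) :
  \big[op/idx]_(j < 3) F j = op (F i) (op (F (ordS i)) (F (ordS (ordS i)))).
Proof.
rewrite !big_ord_recl big_ord0 Monoid.mulm1.
case: i => [[|[|[|?]]] Hi] //.
- by congr (op (F _) (op (F _) (F _))); apply: val_inj.
- set x := F _; set y := F _; set z := F _.
  rewrite [LHS]Monoid.mulmCA (Monoid.mulmC op x z) {}/x {}/y {}/z.
  by congr (op (F _) (op (F _) (F _))); apply: val_inj.
- set x := F _; set y := F _; set z := F _.
  rewrite [LHS]Monoid.mulmA [LHS]Monoid.mulmC {}/x {}/y {}/z.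
  by congr (op (F _) (op (F _) (F _))); apply: val_inj.
Qed.

Definition lf (W : eqType) (x y z : W) (p q r : C) (u : W) : C :=
  (if x == u then -(q/r) else 1) * (if y == u then -(r/p) else 1) * (if z == u then -(p/q) else 1).

Definition Gl (W B : finType) (nb : B -> 'I_3 -> W) (mu : B -> 'I_3 -> C) (u : W) (c : B) : C :=
  \prod_(i < 3 | nb c i == u) (- (mu c (ordS i) / mu c (ord_pred i))).

Lemma Gl_rot (W B : finType) (nb : B -> 'I_3 -> W) (mu : B -> 'I_3 -> C) (u : W) (c : B) (i : 'I_3) :
  Gl nb mu u c = lf (nb c i) (nb c (ordS i)) (nb c (ordS (ordS i)))
                    (mu c i) (mu c (ordS i)) (mu c (ordS (ordS i))) u.
Proof.
rewrite /Gl big_mkcond (@big_rot3 _ _ _ _ i) /= /lf.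
by rewrite !ordS3K !ord_pred3 !ordS3K mulrA.
Qed.

Lemma Yvar_split (W B : finType) (nb : B -> 'I_3 -> W) (mu : B -> 'I_3 -> C) (u : W) :
  Yvar nb mu u = - \prod_c Gl nb mu u c.
Proof.
rewrite /Yvar /Gl pair_big_dep /=.
have := prodrN [pred e : edge B | nb e.1 e.2 == u]
   (fun e : edge B => mu e.1 (ordS e.2) / mu e.1 (ord_pred e.2)).
rewrite /= => ->.
by rewrite exprS mulNr mul1r mulNr.
Qed.


Definition fq (W : eqType) (x y a c : W) : int :=
  bz ((x == a) && (y == c)) - bz ((x == c) && (y == a)).
Ltac elim_eqs := repeat match goal with
 | H : is_true (?x != ?x) |- _ => by rewrite eqxx in H
 | |- context [?x == ?x] => rewrite eqxx
 | H : is_true (?x != ?y) |- context [?x == ?y] => rewrite (negbTE H)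
 | H : is_true (?y != ?x) |- context [?x == ?y] => rewrite (eq_sym x y) (negbTE H)
 end.

Ltac split_on v := repeat match goal with
 | H : is_true (?x != ?x) |- _ => by rewrite eqxx in H
 | |- context [?x == ?x] => rewrite eqxx
 | H : is_true (?x != ?y) |- context [?x == ?y] => rewrite (negbTE H)
 | H : is_true (?y != ?x) |- context [?x == ?y] => rewrite (eq_sym x y) (negbTE H)
 | |- context [?x == v] => case: (eqVneq x v) => [?|?]; [subst|]
 | |- context [v == ?x] => case: (eqVneq v x) => [?|?]; [subst|]
 end.

Lemma ltz0S n : (0 < Posz n.+1 :> int) = true. Proof. by []. Qed.
Lemma ltz00 : (0 < Posz 0 :> int) = false. Proof. by []. Qed.
Lemma ltz0N n : (0 < Negz n :> int) = false. Proof. by []. Qed.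
Lemma oppNegz n : - Negz n = Posz n.+1. Proof. by []. Qed.
Lemma expPos (x : C) n : x ^ Posz n = x ^+ n. Proof. by []. Qed.

Lemma Yalg (W : eqType) (w0 w1 w2 w3 w4 u : W) (a1 a2 a3 a4 R : C) (nu1 nu2 : int) :
  w0 != w1 -> w0 != w2 -> w0 != w3 -> w0 != w4 -> w1 != w2 -> w3 != w4 ->
  w1 != w4 -> w2 != w3 ->
  a1 + a2 = 1 -> a3 + a4 = 1 -> a1 != 0 -> a2 != 0 -> a3 != 0 -> a4 != 0 -> a1 - a4 != 0 ->
  (u == w0 -> R = 1) ->
  let old x y := fq w0 w1 x y + fq w1 w2 x y + fq w2 w0 x y + fq w0 w3 x y + fq w3 w4 x y + fq w4 w0 x y in
  nu1 = old w0 u -> nu2 = old u w0 ->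
  let Y x Rx := - (lf w0 w1 w2 (-1) a1 a2 x * lf w0 w3 w4 (-1) a3 a4 x * Rx) in
  - (lf w0 w4 w1 (a1 - a4) a4 (-a1) u * lf w0 w2 w3 (a1 - a4) a2 (-a3) u * R) =
  if u == w0 then (Y w0 1)^-1
  else if 0 < nu1 then Y u R * (1 + Y w0 1) ^ nu1
  else if 0 < nu2 then Y u R * (1 + (Y w0 1)^-1) ^ (- nu2)
  else Y u R.
Proof.
move=> ? ? ? ? ? ? ? ? E12 E34 n1 n2 n3 n4 ne HR old Hnu1 Hnu2 Y.
rewrite /Y /old /fq /lf in Hnu1 Hnu2 *; clear Y old.
have {}E12 : a2 = 1 - a1 by rewrite -E12; ring.
have {}E34 : a4 = 1 - a3 by rewrite -E34; ring.
subst a2 a4.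
have nD : - (- a1 * - a3) + (1 - a1) * (1 - a3) != 0.
  by rewrite (_ : - (- a1 * - a3) + (1 - a1) * (1 - a3) = - (a1 - (1 - a3))); [rewrite oppr_eq0 | ring].
move: HR Hnu1 Hnu2; split_on u; elim_eqs; rewrite /bz /= => HR Hnu1 Hnu2.
all: vm_compute in Hnu1; vm_compute in Hnu2; subst nu1 nu2.
all: rewrite ?ltz0S ?ltz00 ?ltz0N ?oppNegz ?expPos.
all: try (have {}HR := HR isT; subst R).
all: rewrite -?exprnN ?expr1 ?expr2.
all: try by [].
all: rewrite ?mulr1 ?mul1r.
all: field; by rewrite ?n1 ?n2 ?n3 ?n4 ?ne ?nD.
Qed.


Lemma hvalZ d (h : 'cV[C]_d.+1) (c : C) v : hval h (c *: v) = c * hval h v.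
Proof. by rewrite /hval -scalemxAl mxE. Qed.
Lemma hvalD d (h : 'cV[C]_d.+1) u v : hval h (u + v) = hval h u + hval h v.
Proof. by rewrite /hval mulmxDl mxE. Qed.
Lemma hvalN d (h : 'cV[C]_d.+1) v : hval h (- v) = - hval h v.
Proof. by rewrite /hval mulNmx mxE. Qed.
Lemma hval0 d (h : 'cV[C]_d.+1) : hval h 0 = 0.
Proof. by rewrite /hval mul0mx mxE. Qed.

Lemma aff_scale d (h : 'cV[C]_d.+1) (c : C) v : c != 0 -> aff h (c *: v) = aff h v.
Proof.
move=> c0; rewrite /aff hvalZ scalerA invfM mulrAC mulVf // mul1r //.
Qed.

Lemma V_aff d (h : 'cV[C]_d.+1) V T : hval h V = 1 -> proj_eq V T -> V = aff h T.
Proof.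
move=> hV [c c0 E]; subst V; rewrite hvalZ in hV.
have hT : hval h T = c^-1 by rewrite -[hval h T](mulKf c0) hV mulr1.
by rewrite /aff hT invrK.
Qed.

Lemma TCD_neq (W B : finType) d (nb : B -> 'I_3 -> W) (T : W -> 'rV[C]_d.+1) b i j :
  is_TCD nb T -> i != j -> nb b i != nb b j.
Proof.
move=> [_ H] ij; apply/eqP => E; have [H1 _] := H b.
by apply: (H1 i j ij); rewrite E; exists 1; rewrite ?oner_eq0 ?scale1r.
Qed.

Lemma aff_neq d (h : 'cV[C]_d.+1) x y :
  hval h x != 0 -> hval h y != 0 -> ~ proj_eq x y -> aff h x != aff h y.
Proof.
move=> hx hy np; apply/eqP => E; apply: np; rewrite /proj_eq.
apply: (ex_intro2 _ _ (hval h x / hval h y)); first by rewrite mulf_neq0 ?invr_eq0.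
move: E; rewrite /aff => E.
have E' : x = hval h x *: ((hval h x)^-1 *: x) by rewrite scalerA mulfV // scale1r.
by rewrite {1}E' E scalerA.
Qed.

Lemma indep_aff d (h : 'cV[C]_d.+1) y z p q :
  hval h y = 1 -> hval h z = 1 -> y != z -> p *: y + q *: z = 0 -> p = 0 /\ q = 0.
Proof.
move=> hy hz yz E.
have pq : p + q = 0 by move: (congr1 (hval h) E); rewrite hvalD !hvalZ hy hz hval0 !mulr1.
have qE : q = - p by apply/eqP; rewrite -addr_eq0 addrC pq.
subst q; rewrite scaleNr -scalerBr in E.
move/eqP: E; rewrite scaler_eq0 subr_eq0 (negbTE yz) orbF => /eqP ->.
by split => //; rewrite oppr0.
Qed.

Lemma rel_scale d (h : 'cV[C]_d.+1) (x y z : 'rV[C]_d.+1) p q r p' q' r' :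
  hval h y = 1 -> hval h z = 1 -> y != z -> p != 0 ->
  p *: x + q *: y + r *: z = 0 -> p' *: x + q' *: y + r' *: z = 0 ->
  q' = p' / p * q /\ r' = p' / p * r.
Proof.
move=> hy hz yz p0 E1 E2.
have E : (p' * q - p * q') *: y + (p' * r - p * r') *: z = 0.
  apply/rowP => k; move/rowP/(_ k): E1; move/rowP/(_ k): E2; rewrite !mxE => E2 E1.
  transitivity (p' * (p * x 0 k + q * y 0 k + r * z 0 k) - p * (p' * x 0 k + q' * y 0 k + r' * z 0 k)); first ring.
  by rewrite E1 E2; ring.
have [Eq Er] := indep_aff hy hz yz E.
split.
- by apply: (mulfI p0); rewrite mulrA mulrCA mulfV // mulr1; apply/eqP; rewrite eq_sym -subr_eq0; apply/eqP; rewrite -Eq; ring.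
- by apply: (mulfI p0); rewrite mulrA mulrCA mulfV // mulr1; apply/eqP; rewrite eq_sym -subr_eq0; apply/eqP; rewrite -Er; ring.
Qed.

Lemma Qalg (W : eqType) (w0 w1 w2 w3 w4 a c : W) (Rq : int) :
  w0 != w1 -> w0 != w2 -> w0 != w3 -> w0 != w4 -> w1 != w2 -> w3 != w4 ->
  w1 != w4 -> w2 != w3 ->
  ((a == w0) || (c == w0) -> Rq = 0) ->
  let old x y := fq w0 w1 x y + fq w1 w2 x y + fq w2 w0 x y + fq w0 w3 x y + fq w3 w4 x y + fq w4 w0 x y in
  let new x y := fq w0 w4 x y + fq w4 w1 x y + fq w1 w0 x y + fq w0 w2 x y + fq w2 w3 x y + fq w3 w0 x y in
  new a c + Rq = if (a == w0) || (c == w0) then - (old a c + Rq)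
     else old a c + Rq + Num.max 0 (old a w0) * Num.max 0 (old w0 c)
          - Num.max 0 (old c w0) * Num.max 0 (old w0 a).
Proof.
move=> ? ? ? ? ? ? ? ? HR old new; rewrite /new /old /fq; clear new old.
move: HR; split_on a; try split_on c; try split_on w1; try split_on w2; move=> HR.
all: elim_eqs.
all: rewrite /bz /=.
all: move: HR; rewrite /=; move=> HR; try (have {}HR := HR isT).
all: rewrite ?subr0 ?sub0r ?addr0 ?add0r.
all: clear - HR; lia.
Qed.



Lemma divKl (s q r : C) : s != 0 -> (s * q) / (s * r) = q / r.
Proof. by move=> s0; rewrite invfM mulrACA mulfV // mul1r. Qed.

Lemma lf_scale (W : eqType) (x y z : W) (s p q r : C) u : s != 0 ->
  lf x y z (s * p) (s * q) (s * r) u = lf x y z p q r u.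
Proof. by move=> s0; rewrite /lf !divKl. Qed.

Definition Ql (W B : finType) (nb : B -> 'I_3 -> W) (a c : W) (x : B) : int :=
  \sum_(i < 3) (bz ((nb x i == a) && (nb x (ordS i) == c))
                - bz ((nb x i == c) && (nb x (ordS i) == a))).

Definition Qbd (W : finType) n (bd : 'I_n -> W) (a c : W) : int :=
  \sum_(i : 'I_n) \sum_(j : 'I_n | val i == (val j).+1)
     (bz ((bd i == a) && (bd j == c)) - bz ((bd i == c) && (bd j == a))).

Lemma Ql_rot (W B : finType) (nb : B -> 'I_3 -> W) (a c : W) (x : B) (i : 'I_3) :
  Ql nb a c x = fq (nb x i) (nb x (ordS i)) a c + fq (nb x (ordS i)) (nb x (ordS (ordS i))) a c
              + fq (nb x (ordS (ordS i))) (nb x i) a c.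
Proof. by rewrite /Ql (@big_rot3 _ _ _ _ i) /= ordS3K addrA. Qed.

Lemma quiver_split (W B : finType) n (nb : B -> 'I_3 -> W) (bd : 'I_n -> W) a c :
  quiver nb bd a c = \sum_x Ql nb a c x + Qbd bd a c.
Proof. by rewrite /quiver /Ql pair_big. Qed.

Lemma big_split2 (R : Type) (idx : R) (op : Monoid.com_law idx) (B : finType) (b b' : B) (F : B -> R) :
  b != b' -> \big[op/idx]_c F c = op (op (F b) (F b')) (\big[op/idx]_(c | (c != b) && (c != b')) F c).
Proof.
move=> bb; rewrite (bigD1 b) // (bigD1 b') /=; last by rewrite eq_sym.
rewrite Monoid.mulmA; congr (op _ _); apply: eq_bigl => c; by rewrite andbC.
Qed.

Lemma card2_elems (T : finType) (A : {pred T}) x y z :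
  #|A| = 2%N -> x \in A -> y \in A -> x != y -> z \in A -> z = x \/ z = y.
Proof.
move=> cA xA yA xy zA.
case: (eqVneq z x) => [->|zx]; first by left.
case: (eqVneq z y) => [->|zy]; first by right.
have := cA; rewrite (cardD1 x) (cardD1 y) (cardD1 z) !inE xA yA zA (negbTE zx) (negbTE zy) eq_sym xy /=.
by [].
Qed.

Lemma fqC (W : eqType) (x y a c : W) : fq y x a c = - fq x y a c.
Proof. by rewrite /fq andbC (andbC (y == c)) opprB. Qed.

Lemma Gl_nil (W B : finType) (nb : B -> 'I_3 -> W) mu u c :
  (forall k, nb c k != u) -> Gl nb mu u c = 1.
Proof. by move=> H; rewrite /Gl big_pred0 // => k; apply/negbTE. Qed.

Lemma Ql_nil (W B : finType) (nb : B -> 'I_3 -> W) a c x :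
  (forall k, nb x k != a) -> Ql nb a c x = 0.
Proof.
move=> H; rewrite /Ql big1 // => k _.
by rewrite (negbTE (H k)) (negbTE (H (ordS k))) andbF /= subr0.
Qed.

Lemma Ql_nil2 (W B : finType) (nb : B -> 'I_3 -> W) a c x :
  (forall k, nb x k != c) -> Ql nb a c x = 0.
Proof.
move=> H; rewrite /Ql big1 // => k _.
by rewrite (negbTE (H k)) (negbTE (H (ordS k))) andbF /= subr0.
Qed.

Lemma Qbd_nil (W : finType) n (bd : 'I_n -> W) a c :
  ((forall k, bd k != a) \/ (forall k, bd k != c)) -> Qbd bd a c = 0.
Proof.
move=> H; rewrite /Qbd big1 // => i _; rewrite big1 // => j _.
by case: H => H; rewrite ?(negbTE (H i)) ?(negbTE (H j)) ?andbF /= ?subr0.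
Qed.

Lemma rel3 (W B : finType) d (nb : B -> 'I_3 -> W) (V : W -> 'rV[C]_d.+1) (mu : B -> 'I_3 -> C) b i :
  \sum_(k < 3) mu b k *: V (nb b k) = 0 ->
  mu b i *: V (nb b i) + mu b (ordS i) *: V (nb b (ordS i))
  + mu b (ordS (ordS i)) *: V (nb b (ordS (ordS i))) = 0.
Proof. by rewrite (@big_rot3 _ _ _ _ i) /= addrA. Qed.

Lemma Vneq (W B : finType) d (nb : B -> 'I_3 -> W) (T : W -> 'rV[C]_d.+1) h V c i j :
  is_TCD nb T -> generic h T -> (forall w, V w = aff h (T w)) -> i != j ->
  V (nb c i) != V (nb c j).
Proof.
move=> [_ HT] gT HV ij; rewrite !HV; apply: aff_neq; try exact: gT.
by have [H _] := HT c; apply: H.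
Qed.

Lemma ordS_neq (i : 'I_3) : ordS i != ordS (ordS i).
Proof. by case: i => [[|[|[|?]]] ?]. Qed.
Lemma ordS_neq' (i : 'I_3) : i != ordS i.
Proof. by case: i => [[|[|[|?]]] ?]. Qed.
Lemma ordS_neq'' (i : 'I_3) : i != ordS (ordS i).
Proof. by case: i => [[|[|[|?]]] ?]. Qed.

Lemma Gl_other (W B : finType) d (nb nb' : B -> 'I_3 -> W) (T : W -> 'rV[C]_d.+1) h V mu V' mu' u c :
  is_TCD nb T -> generic h T -> (forall w, hval h (V w) = 1) -> (forall w, V w = aff h (T w)) ->
  (forall b i, mu b i != 0) -> (forall b, \sum_(i < 3) mu b i *: V (nb b i) = 0) ->
  (forall b, \sum_(i < 3) mu' b i *: V' (nb' b i) = 0) ->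
  nb' c = nb c -> (forall k, V' (nb c k) = V (nb c k)) -> mu' c ord0 != 0 ->
  Gl nb' mu' u c = Gl nb mu u c.
Proof.
move=> TT gT hV HV muNZ rel rel' Enb EV m0.
rewrite !(Gl_rot _ _ _ _ ord0) Enb.
have R1 := @rel3 W B d nb V mu c ord0 (rel c).
have R2 := @rel3 W B d nb' V' mu' c ord0 (rel' c); rewrite Enb !EV in R2.
have [E1 E2] := rel_scale (hV _) (hV _) (Vneq c TT gT HV (ordS_neq ord0)) (muNZ c ord0) R1 R2.
set s := mu' c ord0 / mu c ord0.
have s0 : s != 0 by rewrite mulf_neq0 ?invr_eq0.
have E0 : mu' c ord0 = s * mu c ord0 by rewrite /s mulfVK.
by rewrite E0 E1 E2 lf_scale.
Qed.

Lemma Qspider (W : eqType) (w1 w2 w3 w4 a c : W) :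
  fq w1 w2 a c + fq w2 w3 a c + fq w3 w1 a c + (fq w1 w3 a c + fq w3 w4 a c + fq w4 w1 a c)
  = fq w1 w2 a c + fq w2 w4 a c + fq w4 w1 a c + (fq w3 w4 a c + fq w4 w2 a c + fq w2 w3 a c).
Proof. rewrite (fqC w1 w3) (fqC w2 w4); ring. Qed.

Lemma Salg (W : eqType) (w1 w2 w3 w4 u : W) (m1 m2 m3 n1 n3 n4 : C) :
  w1 != w2 -> w1 != w3 -> w2 != w3 -> w1 != w4 -> w3 != w4 -> w2 != w4 ->
  m1 != 0 -> m2 != 0 -> m3 != 0 -> n1 != 0 -> n3 != 0 -> n4 != 0 ->
  n3 * m1 - m3 * n1 != 0 ->
  lf w1 w2 w3 m1 m2 m3 u * lf w1 w3 w4 n1 n3 n4 u =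
  lf w1 w2 w4 (n3 * m1 - m3 * n1) (n3 * m2) (- (m3 * n4)) u *
  lf w3 w4 w2 (- (n3 * m1 - m3 * n1)) (- (m1 * n4)) (n1 * m2) u.
Proof.
move=> ? ? ? ? ? ? h1 h2 h3 h4 h5 h6 hD.
rewrite /lf; split_on u; elim_eqs.
all: rewrite ?mulr1 ?mul1r.
all: try by [].
all: field; by rewrite ?h1 ?h2 ?h3 ?h4 ?h5 ?h6 ?hD.
Qed.

Lemma lf_rot (W : eqType) (x y z : W) p q r u : lf x y z p q r u = lf z x y r p q u.
Proof. by rewrite /lf mulrC mulrA. Qed.

Lemma rel_pos (W B : finType) d (nb : B -> 'I_3 -> W) (mu : B -> 'I_3 -> C) (V : W -> 'rV[C]_d.+1) h c i p q r :
  (forall w, hval h (V w) = 1) -> V (nb c (ordS i)) != V (nb c (ordS (ordS i))) -> p != 0 ->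
  p *: V (nb c i) + q *: V (nb c (ordS i)) + r *: V (nb c (ordS (ordS i))) = 0 ->
  \sum_(k < 3) mu c k *: V (nb c k) = 0 ->
  mu c (ordS i) = mu c i / p * q /\ mu c (ordS (ordS i)) = mu c i / p * r.
Proof.
move=> hV yz p0 Ref Rel.
exact: (rel_scale (hV _) (hV _) yz p0 Ref (@rel3 W B d nb V mu c i Rel)).
Qed.

Lemma Gl_ref (W B : finType) d (nb : B -> 'I_3 -> W) (mu : B -> 'I_3 -> C) (V : W -> 'rV[C]_d.+1) h c i p q r u :
  (forall w, hval h (V w) = 1) -> V (nb c (ordS i)) != V (nb c (ordS (ordS i))) -> p != 0 ->
  mu c i != 0 ->
  p *: V (nb c i) + q *: V (nb c (ordS i)) + r *: V (nb c (ordS (ordS i))) = 0 ->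
  \sum_(k < 3) mu c k *: V (nb c k) = 0 ->
  Gl nb mu u c = lf (nb c i) (nb c (ordS i)) (nb c (ordS (ordS i))) p q r u.
Proof.
move=> hV yz p0 m0 Ref Rel.
have [E1 E2] := rel_pos hV yz p0 Ref Rel.
rewrite (Gl_rot _ _ _ _ i) E1 E2.
have s0 : mu c i / p != 0 by rewrite mulf_neq0 ?invr_eq0.
have E0 : mu c i = (mu c i / p) * p by rewrite mulfVK.
by rewrite {1}E0 lf_scale.
Qed.

Lemma quiver_dec (W B : finType) n (nb : B -> 'I_3 -> W) (bd : 'I_n -> W) b b' a c :
  b != b' -> quiver nb bd a c = Ql nb a c b + Ql nb a c b'
     + (\sum_(x | (x != b) && (x != b')) Ql nb a c x + Qbd bd a c).
Proof. by move=> bb; rewrite quiver_split (big_split2 _ _ bb) addrA. Qed.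



Lemma resplit_part (d n : nat) (W B : finType)
  (nb : B -> 'I_3 -> W) (bd : 'I_n -> W)
  (T : W -> 'rV[C]_d.+1) (h : 'cV[C]_d.+1)
  (nb' : B -> 'I_3 -> W) (T' : W -> 'rV[C]_d.+1) :
  is_TCD nb T -> is_TCD nb' T' -> generic h T -> generic h T' ->
  (forall (w0 w1 w2 w3 w4 : W) (b b' : B),
     resplit_graph nb nb' bd w0 w1 w2 w3 w4 b b' ->
     resplit_points h T T' w0 w1 w2 w3 w4 ->
     forall V mu V' mu', affine_VRC nb T h V mu -> affine_VRC nb' T' h V' mu' ->
       (forall a c, quiver nb' bd a c = mut_quiver (quiver nb bd) w0 a c) /\
       (forall u, internal bd u ->
          Yvar nb' mu' u = mut_Y (quiver nb bd) (Yvar nb mu) w0 u)).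
Proof.
move=> TCD TCD' gT gT' w0 w1 w2 w3 w4 b b'.
move=> [[bb' intw0 card2] [[i [Ei0 Ei1 Ei2]] [j [Ej0 Ej1 Ej2]] [k [Ek0 Ek1 Ek2]] [l [El0 El1 El2]] Hoth]].
move=> [Hpt [a1 [a2 [a3 [a4 [A12 A34 AT']]]]]].
move=> V mu V' mu' [hV pV muNZ rel] [hV' pV' muNZ' rel'].
have HV : forall w, V w = aff h (T w) by move=> w; apply: V_aff.
have HV' : forall w, V' w = aff h (T' w) by move=> w; apply: V_aff.
have EVV : forall w, w != w0 -> V' w = V w.
  move=> w ww; rewrite HV HV'; have [c c0 ->] := Hpt w ww; exact: aff_scale.
have n01 : w0 != w1 by rewrite -Ei0 -Ei1; apply: TCD_neq TCD (ordS_neq' i).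
have n02 : w0 != w2 by rewrite -Ei0 -Ei2; apply: TCD_neq TCD (ordS_neq'' i).
have n12 : w1 != w2 by rewrite -Ei1 -Ei2; apply: TCD_neq TCD (ordS_neq i).
have n03 : w0 != w3 by rewrite -Ej0 -Ej1; apply: TCD_neq TCD (ordS_neq' j).
have n04 : w0 != w4 by rewrite -Ej0 -Ej2; apply: TCD_neq TCD (ordS_neq'' j).
have n34 : w3 != w4 by rewrite -Ej1 -Ej2; apply: TCD_neq TCD (ordS_neq j).
have n14 : w1 != w4 by rewrite eq_sym -Ek1 -Ek2; apply: TCD_neq TCD' (ordS_neq k).
have n23 : w2 != w3 by rewrite -El1 -El2; apply: TCD_neq TCD' (ordS_neq l).
have noW0 : forall c k, c != b -> c != b' -> nb c k != w0.
  move=> c k' cb cb'; apply/negP => /eqP E.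
  have H := @card2_elems _ [pred e : edge B | nb e.1 e.2 == w0] (b, i) (b', j) (c, k') card2.
  case: H.
  - by rewrite inE /= Ei0.
  - by rewrite inE /= Ej0.
  - by rewrite xpair_eqE negb_and bb'.
  - by rewrite inE /= E.
  - by case=> Ec _; rewrite Ec eqxx in cb.
  - by case=> Ec _; rewrite Ec eqxx in cb'.
have Ysplit : forall (nb0 : B -> 'I_3 -> W) (mu0 : B -> 'I_3 -> C) (u : W), Yvar nb0 mu0 u =
   - (Gl nb0 mu0 u b * Gl nb0 mu0 u b' * \prod_(c | (c != b) && (c != b')) Gl nb0 mu0 u c).
  by move=> nb0 mu0 u; rewrite Yvar_split (big_split2 _ _ bb').
rewrite -!HV in A12 A34.
have s12 : a1 + a2 = 1.
  by move: (congr1 (hval h) A12); rewrite hvalD !hvalZ !hV !mulr1 => E; rewrite -E.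
have s34 : a3 + a4 = 1.
  by move: (congr1 (hval h) A34); rewrite hvalD !hvalZ !hV !mulr1 => E; rewrite -E.
have N1 : (-1 : C) != 0 by rewrite oppr_eq0 oner_eq0.
have refb : (-1) *: V (nb b i) + a1 *: V (nb b (ordS i)) + a2 *: V (nb b (ordS (ordS i))) = 0.
  by rewrite Ei0 Ei1 Ei2 A12 scaleN1r -addrA addNr.
have refb' : (-1) *: V (nb b' j) + a3 *: V (nb b' (ordS j)) + a4 *: V (nb b' (ordS (ordS j))) = 0.
  by rewrite Ej0 Ej1 Ej2 A34 scaleN1r -addrA addNr.
have Db := Vneq b TCD gT HV (ordS_neq i).
have Db' := Vneq b' TCD gT HV (ordS_neq j).
have [Eb1 Eb2] := rel_pos hV Db N1 refb (rel b).
have [Eb'1 Eb'2] := rel_pos hV Db' N1 refb' (rel b').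
have a1n : a1 != 0 by move: (muNZ b (ordS i)); rewrite Eb1 mulf_eq0 negb_or => /andP [].
have a2n : a2 != 0 by move: (muNZ b (ordS (ordS i))); rewrite Eb2 mulf_eq0 negb_or => /andP [].
have a3n : a3 != 0 by move: (muNZ b' (ordS j)); rewrite Eb'1 mulf_eq0 negb_or => /andP [].
have a4n : a4 != 0 by move: (muNZ b' (ordS (ordS j))); rewrite Eb'2 mulf_eq0 negb_or => /andP [].
have Gb : forall u, Gl nb mu u b = lf w0 w1 w2 (-1) a1 a2 u.
  by move=> u; rewrite (Gl_ref u hV Db N1 (muNZ b i) refb (rel b)) Ei0 Ei1 Ei2.
have Gb' : forall u, Gl nb mu u b' = lf w0 w3 w4 (-1) a3 a4 u.
  by move=> u; rewrite (Gl_ref u hV Db' N1 (muNZ b' j) refb' (rel b')) Ej0 Ej1 Ej2.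
have [c0 c0n ET'] := AT'.
rewrite -!HV in ET'.
have hX : hval h (a1 *: V w1 - a4 *: V w4) = a1 - a4 by rewrite hvalD hvalN !hvalZ !hV !mulr1.
have en : a1 - a4 != 0 by move: (gT' w0); rewrite ET' hvalZ hX mulf_eq0 negb_or => /andP [].
have V'0 : V' w0 = (a1 - a4)^-1 *: (a1 *: V w1 - a4 *: V w4) by rewrite HV' ET' aff_scale // /aff hX.
have n40 : w4 != w0 by rewrite eq_sym.
have n10 : w1 != w0 by rewrite eq_sym.
have n20 : w2 != w0 by rewrite eq_sym.
have n30 : w3 != w0 by rewrite eq_sym.
have refn : (a1 - a4) *: V' (nb' b k) + a4 *: V' (nb' b (ordS k)) + (- a1) *: V' (nb' b (ordS (ordS k))) = 0.
  by rewrite Ek0 Ek1 Ek2 V'0 (EVV w4 n40) (EVV w1 n10) scalerA mulfV // scale1r scaleNr subrK addrN.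
have refn' : (a1 - a4) *: V' (nb' b' l) + a2 *: V' (nb' b' (ordS l)) + (- a3) *: V' (nb' b' (ordS (ordS l))) = 0.
  rewrite El0 El1 El2 V'0 (EVV w2 n20) (EVV w3 n30) scalerA mulfV // scale1r.
  have H0 : (a1 *: V w1 + a2 *: V w2) - (a3 *: V w3 + a4 *: V w4) = 0 by rewrite -A12 -A34 subrr.
  by rewrite -H0; apply/rowP => t; rewrite !mxE; ring.
have Dn := Vneq b TCD' gT' HV' (ordS_neq k).
have Dn' := Vneq b' TCD' gT' HV' (ordS_neq l).
have Gn : forall u, Gl nb' mu' u b = lf w0 w4 w1 (a1 - a4) a4 (- a1) u.
  by move=> u; rewrite (Gl_ref u hV' Dn en (muNZ' b k) refn (rel' b)) Ek0 Ek1 Ek2.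
have Gn' : forall u, Gl nb' mu' u b' = lf w0 w2 w3 (a1 - a4) a2 (- a3) u.
  by move=> u; rewrite (Gl_ref u hV' Dn' en (muNZ' b' l) refn' (rel' b')) El0 El1 El2.
have Rrest : forall u, \prod_(c | (c != b) && (c != b')) Gl nb' mu' u c
                     = \prod_(c | (c != b) && (c != b')) Gl nb mu u c.
  move=> u; apply: eq_bigr => c /andP [cb cb'].
  apply: (@Gl_other W B d nb nb' T h V mu V' mu' u c TCD gT hV HV muNZ rel rel' (Hoth c cb cb')) => //.
  by move=> k'; apply: EVV; apply: noW0.
have Rw0 : \prod_(c | (c != b) && (c != b')) Gl nb mu w0 c = 1.
  by apply: big1 => c /andP [cb cb']; apply: Gl_nil => k'; apply: noW0.
pose Rq a c := \sum_(x | (x != b) && (x != b')) Ql nb a c x + Qbd bd a c.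
have HQ : forall a c, quiver nb bd a c = fq w0 w1 a c + fq w1 w2 a c + fq w2 w0 a c
    + fq w0 w3 a c + fq w3 w4 a c + fq w4 w0 a c + Rq a c.
  move=> a c; rewrite (quiver_dec _ _ _ _ bb') (Ql_rot _ _ _ b i) (Ql_rot _ _ _ b' j).
  rewrite Ei0 Ei1 Ei2 Ej0 Ej1 Ej2 /Rq; ring.
have HQ' : forall a c, quiver nb' bd a c = fq w0 w4 a c + fq w4 w1 a c + fq w1 w0 a c
    + fq w0 w2 a c + fq w2 w3 a c + fq w3 w0 a c + Rq a c.
  move=> a c; rewrite (quiver_dec _ _ _ _ bb') (Ql_rot _ _ _ b k) (Ql_rot _ _ _ b' l).
  rewrite Ek0 Ek1 Ek2 El0 El1 El2 /Rq.
  rewrite (eq_bigr (fun x => Ql nb a c x)); first ring.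
  by move=> x /andP [xb xb']; rewrite /Ql (Hoth x xb xb').
have bdW0 : forall k', bd k' != w0.
  by move=> k'; apply/eqP => E; move: intw0; rewrite /internal -E codom_f.
have HR0 : forall a c, (a == w0) || (c == w0) -> Rq a c = 0.
  move=> a c /orP [] /eqP ->; rewrite /Rq big1 ?add0r.
  - by apply: Qbd_nil; left.
  - by move=> x /andP [xb xb']; apply: Ql_nil => k'; apply: noW0.
  - by apply: Qbd_nil; right.
  - by move=> x /andP [xb xb']; apply: Ql_nil2 => k'; apply: noW0.
split.
- move=> a c.
  have Za : forall x, Rq x w0 = 0 by move=> x; apply: HR0; rewrite eqxx orbT.
  have Zb : forall x, Rq w0 x = 0 by move=> x; apply: HR0; rewrite eqxx.
  rewrite HQ' /mut_quiver !HQ !Za !Zb !addr0.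
  exact: (Qalg n01 n02 n03 n04 n12 n34 n14 n23 (HR0 a c)).
- move=> u _.
  rewrite /mut_Y (Ysplit nb' mu' u) Gn Gn' Rrest.
  rewrite (Ysplit nb mu w0) Gb Gb' Rw0 (Ysplit nb mu u) Gb Gb'.
  apply: (Yalg n01 n02 n03 n04 n12 n34 n14 n23 s12 s34 a1n a2n a3n a4n en).
  + by move/eqP ->; exact: Rw0.
  + by rewrite HQ HR0 ?eqxx // addr0.
  + by rewrite HQ HR0 ?eqxx ?orbT // addr0.
Qed.

Lemma spider_part (d n : nat) (W B : finType)
  (nb : B -> 'I_3 -> W) (bd : 'I_n -> W) (rot : {perm xedge B n})
  (T : W -> 'rV[C]_d.+1) (h : 'cV[C]_d.+1)
  (nb' : B -> 'I_3 -> W) (T' : W -> 'rV[C]_d.+1) :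
  is_TCD nb T -> is_TCD nb' T' -> generic h T -> generic h T' ->
  (forall (w1 w2 w3 w4 : W) (b b' : B),
     spider_graph nb nb' rot w1 w2 w3 w4 b b' ->
     (forall w, proj_eq (T' w) (T w)) ->
     forall V mu V' mu', affine_VRC nb T h V mu -> affine_VRC nb' T' h V' mu' ->
       (forall a c, quiver nb' bd a c = quiver nb bd a c) /\
       (forall u, internal bd u -> Yvar nb' mu' u = Yvar nb mu u)).
Proof.
move=> TCD TCD' gT gT' w1 w2 w3 w4 b b'.
move=> [bb' [i [j [[[Ei0 Ei1 Ei2] [Ej0 Ej1 Ej2] _ _] [[k [Ek0 Ek1 Ek2]] [l [El0 El1 El2]] Hoth]]]]].
move=> Hpt V mu V' mu' [hV pV muNZ rel] [hV' pV' muNZ' rel'].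
have HV : forall w, V w = aff h (T w) by move=> w; apply: V_aff.
have HV' : forall w, V' w = aff h (T' w) by move=> w; apply: V_aff.
have EVV : forall w, V' w = V w.
  move=> w; rewrite HV HV'; have [c c0 ->] := Hpt w; exact: aff_scale.
have n12 : w1 != w2 by rewrite -Ei0 -Ei1; apply: TCD_neq TCD (ordS_neq' i).
have n13 : w1 != w3 by rewrite -Ei0 -Ei2; apply: TCD_neq TCD (ordS_neq'' i).
have n23 : w2 != w3 by rewrite -Ei1 -Ei2; apply: TCD_neq TCD (ordS_neq i).
have n14 : w1 != w4 by rewrite -Ej0 -Ej2; apply: TCD_neq TCD (ordS_neq'' j).
have n34 : w3 != w4 by rewrite -Ej1 -Ej2; apply: TCD_neq TCD (ordS_neq j).
have n24 : w2 != w4 by rewrite -Ek1 -Ek2; apply: TCD_neq TCD' (ordS_neq k).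
split.
- move=> a c; rewrite !(quiver_dec _ _ _ _ bb') (Ql_rot nb _ _ b i) (Ql_rot nb _ _ b' j).
  rewrite (Ql_rot nb' _ _ b k) (Ql_rot nb' _ _ b' l).
  rewrite Ei0 Ei1 Ei2 Ej0 Ej1 Ej2 Ek0 Ek1 Ek2 El0 El1 El2 Qspider.
  rewrite (eq_bigr (fun x => Ql nb a c x)) //.
  by move=> x /andP [xb xb']; rewrite /Ql (Hoth x xb xb').
- move=> u _.
  have Ysplit : forall (nb0 : B -> 'I_3 -> W) (mu0 : B -> 'I_3 -> C) (u : W), Yvar nb0 mu0 u =
   - (Gl nb0 mu0 u b * Gl nb0 mu0 u b' * \prod_(c | (c != b) && (c != b')) Gl nb0 mu0 u c).
    by move=> nb0 mu0 u0; rewrite Yvar_split (big_split2 _ _ bb').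
  rewrite !Ysplit.
  set m1 := mu b i; set m2 := mu b (ordS i); set m3 := mu b (ordS (ordS i)).
  set n1 := mu b' j; set n3 := mu b' (ordS j); set n4 := mu b' (ordS (ordS j)).
  have Rb := @rel3 W B d nb V mu b i (rel b); rewrite Ei0 Ei1 Ei2 in Rb.
  have Rb' := @rel3 W B d nb V mu b' j (rel b'); rewrite Ej0 Ej1 Ej2 in Rb'.
  pose D := n3 * m1 - m3 * n1.
  have refn : (n3 * m2) *: V' (nb' b (ordS k)) + (- (m3 * n4)) *: V' (nb' b (ordS (ordS k)))
              + D *: V' (nb' b (ordS (ordS (ordS k)))) = 0.
    rewrite ordS3K Ek0 Ek1 Ek2 !EVV.
    apply/rowP => t; move/rowP/(_ t): Rb; move/rowP/(_ t): Rb'; rewrite !mxE => Rb' Rb.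
    transitivity (n3 * (m1 * V w1 0 t + m2 * V w2 0 t + m3 * V w3 0 t)
                  - m3 * (n1 * V w1 0 t + n3 * V w3 0 t + n4 * V w4 0 t)); first by rewrite /D; ring.
    by rewrite Rb Rb'; ring.
  have refn' : (- (m1 * n4)) *: V' (nb' b' (ordS l)) + (n1 * m2) *: V' (nb' b' (ordS (ordS l)))
              + (- D) *: V' (nb' b' (ordS (ordS (ordS l)))) = 0.
    rewrite ordS3K El0 El1 El2 !EVV.
    apply/rowP => t; move/rowP/(_ t): Rb; move/rowP/(_ t): Rb'; rewrite !mxE => Rb' Rb.
    transitivity (n1 * (m1 * V w1 0 t + m2 * V w2 0 t + m3 * V w3 0 t)
                  - m1 * (n1 * V w1 0 t + n3 * V w3 0 t + n4 * V w4 0 t)); first by rewrite /D; ring.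
    by rewrite Rb Rb'; ring.
  have m1n : m1 != 0 := muNZ _ _.
  have m2n : m2 != 0 := muNZ _ _.
  have m3n : m3 != 0 := muNZ _ _.
  have n1n : n1 != 0 := muNZ _ _.
  have n3n : n3 != 0 := muNZ _ _.
  have n4n : n4 != 0 := muNZ _ _.
  have p1 : n3 * m2 != 0 by rewrite mulf_neq0.
  have p2 : - (m1 * n4) != 0 by rewrite oppr_eq0 mulf_neq0.
  have Dn := Vneq b TCD' gT' HV' (ordS_neq (ordS k)).
  have Dn' := Vneq b' TCD' gT' HV' (ordS_neq (ordS l)).
  have [_ ED] := rel_pos hV' Dn p1 refn (rel' b).
  have Dnz : D != 0.
    by move: (muNZ' b (ordS (ordS (ordS k)))); rewrite ED mulf_eq0 negb_or => /andP [].
  rewrite (Gl_ref u hV' Dn p1 (muNZ' b _) refn (rel' b)).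
  rewrite (Gl_ref u hV' Dn' p2 (muNZ' b' _) refn' (rel' b')).
  rewrite !ordS3K Ek0 Ek1 Ek2 El0 El1 El2 (Gl_rot _ _ _ _ i) (Gl_rot _ _ _ _ j).
  rewrite Ei0 Ei1 Ei2 Ej0 Ej1 Ej2 -/m1 -/m2 -/m3 -/n1 -/n3 -/n4.
  rewrite (lf_rot w2) (lf_rot w4).
  have Rrest : \prod_(c | (c != b) && (c != b')) Gl nb' mu' u c
             = \prod_(c | (c != b) && (c != b')) Gl nb mu u c.
    apply: eq_bigr => c /andP [cb cb'].
    by apply: (@Gl_other W B d nb nb' T h V mu V' mu' u c TCD gT hV HV muNZ rel rel' (Hoth c cb cb')).
  rewrite Rrest (Salg u n12 n13 n23 n14 n34 n24 m1n m2n m3n n1n n3n n4n Dnz).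
  by rewrite /D.
Qed.

Theorem lemma7p16 (d n : nat) (W B : finType)
  (nb : B -> 'I_3 -> W) (bd : 'I_n -> W) (rot : {perm xedge B n})
  (T : W -> 'rV[C]_d.+1) (h : 'cV[C]_d.+1)
  (nb' : B -> 'I_3 -> W) (T' : W -> 'rV[C]_d.+1) :
  btb_embedding nb bd rot -> minimal rot ->
  is_TCD nb T -> is_TCD nb' T' ->
  h != 0 -> generic h T -> generic h T' ->
  (forall (w0 w1 w2 w3 w4 : W) (b b' : B),
     resplit_graph nb nb' bd w0 w1 w2 w3 w4 b b' ->
     resplit_points h T T' w0 w1 w2 w3 w4 ->
     forall V mu V' mu', affine_VRC nb T h V mu -> affine_VRC nb' T' h V' mu' ->
       (forall a c, quiver nb' bd a c = mut_quiver (quiver nb bd) w0 a c) /\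
       (forall u, internal bd u ->
          Yvar nb' mu' u = mut_Y (quiver nb bd) (Yvar nb mu) w0 u)) /\
  (forall (w1 w2 w3 w4 : W) (b b' : B),
     spider_graph nb nb' rot w1 w2 w3 w4 b b' ->
     (forall w, proj_eq (T' w) (T w)) ->
     forall V mu V' mu', affine_VRC nb T h V mu -> affine_VRC nb' T' h V' mu' ->
       (forall a c, quiver nb' bd a c = quiver nb bd a c) /\
       (forall u, internal bd u -> Yvar nb' mu' u = Yvar nb mu u)).
Proof.
move=> _ _ TCD TCD' _ gT gT'; split.
- exact: resplit_part.
- exact: spider_part.
Qed.
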